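(* If $G$ is a cactus on $n$ vertices, then $\alpha_1(G)\geq \Big\lfloor\frac{n}{2}\Big\rfloor+r(n)$, where $r(n)=0$ if $n\equiv 0\pmod 4$ and $r(n)=1$ otherwise.
   Context: All graphs are finite and simple, with nonempty vertex set. For a graph $G$, a $k$-sparse set is a set of vertices inducing a subgraph of maximum degree at most $k$, and $\alpha_k(G)$ denotes the maximum size of a $k$-sparse set in $G$. A cactus is a graph (not necessarily connected) in which every block is a cycle, a single edge, or a single vertex. *)

(* Defs.v *)
From mathcomp Require Import all_boot.
Set Implicit Arguments. Unset Strict Implicit. Unset Printing Implicit Defensive.

(* A finite simple graph: vertex type T : finType, adjacency e : rel T,
   symmetric and irreflexive. *)
Section Graphs.
Variables (T : finType) (e : rel T).

Definition nbrs_in (S : {set T}) (x : T) : {set T} := [set y in S | e x y].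

Definition k_sparse (k : nat) (S : {set T}) : bool :=
  [forall x in S, #|nbrs_in S x| <= k].

Definition alpha_k (k : nat) : nat := \max_(S : {set T} | k_sparse k S) #|S|.

Definition induced_rel (S : {set T}) : rel T :=
  fun x y => [&& x \in S, y \in S & e x y].

(* G[S] is connected (the empty graph counts as connected) *)
Definition connected_set (S : {set T}) : bool :=
  [forall x in S, forall y in S, connect (induced_rel S) x y].

Definition biconn (S : {set T}) : bool :=
  [&& S != set0, connected_set S & [forall v in S, connected_set (S :\ v)]].

(* a block: a maximal connected subgraph without a cut vertex
   (blocks are induced subgraphs, so they are described by vertex sets) *)
Definition is_block (B : {set T}) : bool :=
  biconn B && [forall C : {set T}, (B \proper C) ==> ~~ biconn C].

Definition is_cycle_set (B : {set T}) : bool :=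
  [&& 3 <= #|B|, connected_set B & [forall x in B, #|nbrs_in B x| == 2]].

Definition is_edge_set (B : {set T}) : bool :=
  [exists x, exists y, (B == [set x; y]) && e x y].

Definition is_vertex_set (B : {set T}) : bool := #|B| == 1.

Definition cactus : Prop :=
  forall B : {set T}, is_block B ->
    [|| is_cycle_set B, is_edge_set B | is_vertex_set B].

End Graphs.

Definition r4 (n : nat) : nat := if n %% 4 == 0 then 0 else 1.

(* Main.v *)
Require Import Defs.
From mathcomp Require Import all_boot.
From mathcomp Require Import zify.

Set Implicit Arguments. Unset Strict Implicit. Unset Printing Implicit Defensive.

Section Proof.
Variables (T : finType) (e : rel T).
Hypothesis esym : symmetric e.
Hypothesis eirr : irreflexive e.

Lemma block_sup : forall k (S : {set T}), #|T| - #|S| <= k -> biconn e S ->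
  exists B : {set T}, S \subset B /\ is_block e B.
Proof.
elim=> [|k IH] S Hk Hb;
  (case: (boolP [forall C : {set T}, (S \proper C) ==> ~~ biconn e C]) => H;
  [by exists S; rewrite subxx /is_block Hb H|]);
  move/forallPn: H => [C]; rewrite negb_imply negbK => /andP [SC bC];
  have := proper_card SC; have := subset_leq_card (subsetT C); rewrite cardsT.
- move=> *; exfalso; lia.
- move=> h1 h2; have [B [CB bB]] := IH C ltac:(lia) bC.
  by exists B; split=> //; apply: subset_trans (proper_sub SC) CB.
Qed.

Lemma nbrs_proper (B : {set T}) x : x \in B -> nbrs_in e B x \proper B.
Proof.
move=> xB; apply/properP; split.
  by apply/subsetP => y; rewrite inE => /andP [].
by exists x => //; rewrite inE eirr andbF.
Qed.

Lemma C_prop : cactus e -> forall S x, biconn e S -> x \in S -> #|nbrs_in e S x| <= 2.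
Proof.
move=> Hc S x Hb xS.
have [B [SB HB]] := block_sup (leqnn _) Hb.
have xB := subsetP SB x xS.
have sub : nbrs_in e S x \subset nbrs_in e B x.
  by apply/subsetP => y; rewrite !inE => /andP [yS ->]; rewrite (subsetP SB _ yS).
apply: leq_trans (subset_leq_card sub) _.
have pc := proper_card (nbrs_proper xB).
have := Hc B HB; case/or3P.
- case/and3P => _ _ /forallP/(_ x); rewrite xB /= => /eqP ->; exact: leqnn.
- case/existsP => a /existsP [b /andP [/eqP HB' _]].
  move: pc; rewrite HB' cards2; case: (a != b) => /=; lia.
- rewrite /is_vertex_set => /eqP h; move: pc; rewrite h; lia.
Qed.

Hypothesis HC : forall S x, biconn e S -> x \in S -> #|nbrs_in e S x| <= 2.

Definition pc (W : {set T}) c (K : {set T}) :=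
  [&& c \in W, c \notin K, K \subset W, K != set0,
   [forall y in K, nbrs_in e W y \subset c |: K] &
   [forall y in K, 2 <= #|nbrs_in e W y|]].

Lemma symI (S : {set T}) : symmetric (induced_rel e S).
Proof. by move=> x y; rewrite /induced_rel esym; case: (x \in S); case: (y \in S). Qed.

Lemma connS (S : {set T}) x y :
  connect (induced_rel e S) x y = connect (induced_rel e S) y x.
Proof. exact: (sym_connect_sym (symI S)). Qed.

Lemma connect_mono (A B : {set T}) x y : A \subset B ->
  connect (induced_rel e A) x y -> connect (induced_rel e B) x y.
Proof.
move=> AB; apply: connect_sub => a b /and3P [aA bA eab].
by apply: connect1; rewrite /induced_rel (subsetP AB _ aA) (subsetP AB _ bA).
Qed.

Lemma edgeI (S : {set T}) x y : x \in S -> y \in S -> e x y ->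
  connect (induced_rel e S) x y.
Proof. by move=> xS yS exy; apply: connect1; rewrite /induced_rel xS yS. Qed.

Lemma pc_sub W c K c' (K' : {set T}) : pc W c K -> K' \subset K -> c' \in W ->
  c' \notin K' -> K' != set0 ->
  (forall y, y \in K' -> nbrs_in e W y \subset c' |: K') -> pc W c' K'.
Proof.
move=> /and5P [cW cK KW Kn0 /andP [_ /forallP Hdeg]] sub c'W c'K' Kn0' Hn.
rewrite /pc c'W c'K' Kn0' (subset_trans sub KW) /=; apply/andP; split.
  by apply/forallP => y; apply/implyP => yK; apply: Hn.
apply/forallP => y; apply/implyP => yK.
exact: (implyP (Hdeg y) (subsetP sub _ yK)).
Qed.

Lemma pair_struct W : forall n c (K : {set T}), #|K| <= n -> pc W c K ->
  exists x y, [/\ x \in W, y \in W, e x y, #|nbrs_in e W x| <= 2 & #|nbrs_in e W y| <= 2].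
Proof.
elim=> [|n IH] c K Hn Hpc; move: (Hpc) => /and5P [cW cK KW Kn0 /andP [/forallP Hnb /forallP Hdeg]].
  by move: Kn0; rewrite -card_gt0; lia.
have Hnb' : forall y, y \in K -> nbrs_in e W y \subset c |: K.
  by move=> y yK; exact: (implyP (Hnb y) yK).
have Hdeg' : forall y, y \in K -> 2 <= #|nbrs_in e W y|.
  by move=> y yK; exact: (implyP (Hdeg y) yK).
have /set0Pn [y0 y0K] := Kn0.
set B := c |: K.
have BW : B \subset W by rewrite subUset sub1set cW KW.
have cnK : forall x, x \in K -> c != x.
  by move=> x xK; apply/eqP => h; rewrite h xK in cK.
set K1 := [set y in K | ~~ connect (induced_rel e K) y0 y].
case: (set_0Vmem K1) => [K10|[z zK1]]; last first.
  have sub1 : K1 \subset K by apply/subsetP => y; rewrite inE => /andP [].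
  have lt1 : #|K1| < #|K|.
    apply: proper_card; apply/properP; split => //; exists y0 => //.
    by rewrite inE y0K connect0.
  apply: (IH c K1); first by lia.
  apply: (pc_sub Hpc sub1 cW).
  - by apply/negP => /(subsetP sub1); rewrite (negbTE cK).
  - by apply/set0Pn; exists z.
  move=> y; rewrite inE => /andP [yK ync]; apply/subsetP => w wN.
  have := subsetP (Hnb' y yK) w wN; rewrite !inE => /orP [->//|wK].
  apply/orP; right; rewrite wK /=; apply/negP => cw; move/negP: ync; apply.
  apply: connect_trans cw _; apply: edgeI => //.
  by move: wN; rewrite inE esym => /andP [].
have KC : connected_set e K.
  have Hc : forall y, y \in K -> connect (induced_rel e K) y0 y.
    move=> y yK; apply/negPn/negP => H.
    have : y \in K1 by rewrite inE yK H.
    by rewrite K10 inE.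
  apply/forallP => a; apply/implyP => aK; apply/forallP => b; apply/implyP => bK.
  apply: connect_trans (Hc b bK); rewrite connS; exact: Hc.
pose K2 x := [set y in K :\ x | ~~ connect (induced_rel e (B :\ x)) c y].
case: (boolP [forall x in K, K2 x == set0]) => [/forallP HK2|]; last first.
  move/forallPn => [x]; rewrite negb_imply => /andP [xK /set0Pn [z zK2]].
  have sub2 : K2 x \subset K :\ x by apply/subsetP => y; rewrite inE => /andP [].
  have lt2 : #|K2 x| < #|K|.
    have := subset_leq_card sub2; have := cardsD1 x K; rewrite xK; lia.
  apply: (IH x (K2 x)); first by lia.
  apply: (pc_sub Hpc (subset_trans sub2 (subD1set _ _)) (subsetP KW _ xK)).
  - by rewrite !inE eqxx.
  - by apply/set0Pn; exists z.
  move=> y; rewrite inE => /andP [yKx ync]; apply/subsetP => w wN.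
  have yK : y \in K by move: yKx; rewrite inE => /andP [].
  have yB : y \in B :\ x by rewrite /B setUC setDUl in_setU yKx.
  have eyw : e y w by move: wN; rewrite inE => /andP [].
  have := subsetP (Hnb' y yK) w wN; rewrite !inE => /orP [/eqP wc|wK].
    exfalso; move/negP: ync; apply; apply: edgeI => //.
      by rewrite !inE eqxx orTb andbT; apply/eqP => h; move: (cnK x xK); rewrite h eqxx.
    by rewrite -wc esym.
  case: (eqVneq w x) => [->|wx]; first by [].
  apply/orP; right; rewrite ?wx ?wK /=; apply/negP => cw; move/negP: ync; apply.
  apply: connect_trans cw _; apply: edgeI => //; last by rewrite esym.
  by rewrite !inE wx wK orbT.
have Hall : forall x y, x \in K -> y \in K :\ x -> connect (induced_rel e (B :\ x)) c y.
  move=> x y xK yKx; apply/negPn/negP => H.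
  have := implyP (HK2 x) xK; move/eqP => h.
  have : y \in K2 x by rewrite inE yKx H.
  by rewrite h inE.
have CBx : forall x, x \in K -> connected_set e (B :\ x).
  move=> x xK.
  have Hc : forall a, a \in B :\ x -> connect (induced_rel e (B :\ x)) c a.
    move=> a; rewrite !inE => /andP [ax /orP [/eqP ->|aK]]; first exact: connect0.
    by apply: (Hall x a xK); rewrite !inE ax aK.
  apply/forallP => a; apply/implyP => aB; apply/forallP => b; apply/implyP => bB.
  apply: connect_trans (Hc b bB); rewrite connS; exact: Hc.
have BC : connected_set e B.
  have /set0Pn [z zN] : nbrs_in e W y0 != set0.
    by rewrite -card_gt0; have := Hdeg' y0 y0K; lia.
  have zB : z \in B by exact: (subsetP (Hnb' y0 y0K) z zN).
  have ey0z : e y0 z by move: zN; rewrite inE => /andP [].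
  have zy0 : z != y0 by apply/eqP => h; rewrite h eirr in ey0z.
  have y0B : y0 \in B by rewrite !inE y0K orbT.
  have Hc : forall a, a \in B -> connect (induced_rel e B) y0 a.
    move=> a aB; case: (eqVneq a y0) => [->|ay0]; first exact: connect0.
    apply: connect_trans (edgeI y0B zB ey0z) _.
    apply: (connect_mono (subD1set B y0)).
    by move/forallP: (CBx y0 y0K) => /(_ z); rewrite in_setD1 zy0 zB /= => /forallP /(_ a); rewrite in_setD1 ay0 aB.
  apply/forallP => a; apply/implyP => aB; apply/forallP => b; apply/implyP => bB.
  apply: connect_trans (Hc b bB); rewrite connS; exact: Hc.
have Bbi : biconn e B.
  apply/and3P; split => //.
    by apply/set0Pn; exists c; rewrite !inE eqxx.
  apply/forallP => v; apply/implyP; rewrite in_setU1 => /orP [/eqP ->|vK].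
    by rewrite /B setU1K.
  exact: CBx.
have degK : forall x, x \in K -> #|nbrs_in e W x| <= 2.
  move=> x xK.
  have -> : nbrs_in e W x = nbrs_in e B x.
    apply/setP => z; rewrite !in_set; apply/andP/andP => [[zW exz]|[zB exz]]; split => //.
      have : z \in nbrs_in e W x by rewrite inE zW exz.
      by move/(subsetP (Hnb' x xK)); rewrite !inE.
    by move: zB => /orP [/set1P ->|/(subsetP KW)].
  by apply: HC => //; rewrite !inE xK orbT.
have : ~~ (nbrs_in e W y0 \subset [set c]).
  apply/negP => /subset_leq_card; rewrite cards1; have := Hdeg' y0 y0K; lia.
case/subsetPn => y yN ync.
have yK : y \in K.
  by have := subsetP (Hnb' y0 y0K) y yN; rewrite !inE; move: ync; rewrite inE => /negbTE ->.
move: yN; rewrite inE => /andP [yW ey0y].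
exists y0, y; split => //; [exact: (subsetP KW) | exact: degK | exact: degK].
Qed.

Lemma cardU1le (A : {set T}) u : #|u |: A| <= #|A|.+1.
Proof. by rewrite cardsU1; case: (u \notin A). Qed.

Lemma struct W : W != set0 ->
  (exists2 u, u \in W & nbrs_in e W u = set0) \/
  (exists u w, [/\ u \in W, w \in W, u != w &
     #|(u |: nbrs_in e W u) :|: (w |: nbrs_in e W w)| <= 4]).
Proof.
move=> Wn0.
case: (boolP [exists u in W, nbrs_in e W u == set0]) =>
  [/existsP [u /andP [uW /eqP h]]|Hiso]; first by left; exists u.
right.
have Hiso' : forall u, u \in W -> 0 < #|nbrs_in e W u|.
  move=> u uW; rewrite card_gt0; apply/negP => h.
  by move/existsPn: Hiso => /(_ u); rewrite uW h.
case: (boolP [exists u in W, exists w in W,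
   [&& u != w, #|nbrs_in e W u| <= 1 & #|nbrs_in e W w| <= 1]]).
  move/existsP => [u /andP [uW /existsP [w /andP [wW /and3P [uw du dw]]]]].
  exists u, w; split => //.
  have := cardsU (u |: nbrs_in e W u) (w |: nbrs_in e W w).
  have := cardU1le (nbrs_in e W u) u; have := cardU1le (nbrs_in e W w) w; lia.
move=> H2.
pose D1 := [set u in W | #|nbrs_in e W u| <= 1].
have D1u : forall u w, u \in D1 -> w \in D1 -> u = w.
  move=> u w; rewrite !inE => /andP [uW du] /andP [wW dw].
  apply/eqP; apply/negPn/negP => uw.
  move/existsPn: H2 => /(_ u); rewrite uW /= => /existsPn /(_ w).
  by rewrite wW uw du dw.
have [c [K Hpc]] : exists c K, pc W c K.
  case: (set_0Vmem D1) => [D10|[l lD1]].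
    have /set0Pn [c cW] := Wn0.
    exists c, (W :\ c); rewrite /pc cW !inE eqxx /= subD1set /=.
    have dg : forall y, y \in W -> 2 <= #|nbrs_in e W y|.
      move=> y yW; rewrite ltnNge; apply/negP => h.
      have : y \in D1 by rewrite inE yW h.
      by rewrite D10 inE.
    apply/and3P; split.
    - have /set0Pn [z zN] : nbrs_in e W c != set0 by rewrite -card_gt0 Hiso'.
      move: zN; rewrite inE => /andP [zW ecz].
      apply/set0Pn; exists z; rewrite !inE zW andbT.
      by apply/eqP => h; rewrite h eirr in ecz.
    - apply/forallP => y; apply/implyP => _; rewrite setD1K //.
      by apply/subsetP => z; rewrite inE => /andP [].
    - apply/forallP => y; apply/implyP; rewrite !inE => /andP [_ yW]; exact: dg.
  move: (lD1); rewrite inE => /andP [lW dl].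
  have : #|nbrs_in e W l| == 1 by have := Hiso' l lW; rewrite eqn_leq dl => ->.
  case/cards1P => c hc.
  have cN : c \in nbrs_in e W l by rewrite hc set11.
  move: (cN); rewrite inE => /andP [cW elc].
  have cl : c != l by apply/eqP => h; rewrite h eirr in elc.
  have ndl : forall y, y \in W -> y != l -> 2 <= #|nbrs_in e W y|.
    move=> y yW yl; rewrite ltnNge; apply/negP => h.
    have yD : y \in D1 by rewrite inE yW h.
    by move: yl; rewrite (D1u _ _ yD lD1) eqxx.
  exists c, (W :\: [set l; c]); rewrite /pc cW !inE eqxx orbT /=.
  apply/and4P; split.
  - by apply/subsetP => z; rewrite inE => /andP [].
  - have : ~~ (nbrs_in e W c \subset [set l]).
      apply/negP => /subset_leq_card; rewrite cards1; have := ndl c cW cl; lia.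
    case/subsetPn => z zN zl; move: zN; rewrite inE => /andP [zW ecz].
    apply/set0Pn; exists z; rewrite !inE zW andbT.
    move: zl; rewrite inE => /negbTE -> /=.
    by apply/eqP => h; rewrite h eirr in ecz.
  - apply/forallP => y; apply/implyP; rewrite !inE => /andP [yn yW].
    apply/subsetP => z; rewrite inE => /andP [zW eyz].
    rewrite !inE zW andbT.
    case: (eqVneq z l) => [zl|zl]; last by rewrite /=; case: (z == c).
    exfalso; have : y \in nbrs_in e W l by rewrite inE yW esym -zl.
    by rewrite hc inE => /eqP yc; move: yn; rewrite yc eqxx orbT.
  - apply/forallP => y; apply/implyP; rewrite !inE => /andP [yn yW].
    by apply: ndl => //; apply/negP => /eqP yl; move: yn; rewrite yl eqxx.
have [x [y [xW yW exy dx dy]]] := pair_struct (leqnn _) Hpc.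
exists x, y; split => //; first by apply/eqP => h; rewrite h eirr in exy.
have sub : (x |: nbrs_in e W x) :|: (y |: nbrs_in e W y) \subset
           nbrs_in e W x :|: nbrs_in e W y.
  apply/subsetP => z; rewrite !inE => /orP [/orP [/eqP ->|->]|/orP [/eqP ->|->]];
    rewrite ?orbT //.
  - by rewrite xW (esym y x) exy orbT.
  - by rewrite yW exy.
apply: leq_trans (subset_leq_card sub) _.
have := cardsU (nbrs_in e W x) (nbrs_in e W y); lia.
Qed.

Definition fb m := m./2 + r4 m.

Lemma f_step m k : k <= m -> 1 <= k <= 4 -> fb m <= fb (m - k) + 2.
Proof. rewrite /fb /r4 => *; case: eqP; case: eqP; lia. Qed.

Lemma f_step1 m : 1 <= m -> fb m <= fb (m - 1) + 1.
Proof. rewrite /fb /r4 => *; case: eqP; case: eqP; lia. Qed.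

Lemma nbrs_sub (A B : {set T}) x : A \subset B -> nbrs_in e A x \subset nbrs_in e B x.
Proof.
by move=> AB; apply/subsetP => y; rewrite !inE => /andP [yA ->]; rewrite (subsetP AB _ yA).
Qed.

Lemma main_ind : forall n (W : {set T}), #|W| <= n ->
  exists S : {set T}, [/\ S \subset W, k_sparse e 1 S & fb #|W| <= #|S|].
Proof.
elim=> [|n IH] W Hn.
  have W0 : W = set0 by apply: cards0_eq; lia.
  exists set0; rewrite W0 cards0 sub0set; split => //.
  by apply/forallP => x; rewrite inE.
case: (set_0Vmem W) => [W0|[u0 u0W]].
  exists set0; rewrite W0 cards0 sub0set; split => //.
  by apply/forallP => x; rewrite inE.
have Wn0 : W != set0 by apply/set0Pn; exists u0.
case: (struct Wn0) => [[u uW Nu]|[u [w [uW wW uw HX]]]].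
  have cW := cardsD1 u W; rewrite uW in cW.
  have [S' [S'W spS' fS']] := IH (W :\ u) ltac:(lia).
  have uS' : u \notin S' by apply/negP => /(subsetP S'W); rewrite !inE eqxx.
  exists (u |: S'); split.
  - by rewrite subUset sub1set uW (subset_trans S'W (subD1set _ _)).
  - apply/forallP => x; apply/implyP; rewrite in_setU1 => /orP [/eqP ->|xS'].
      have : nbrs_in e (u |: S') u \subset nbrs_in e W u.
        by apply: nbrs_sub; rewrite subUset sub1set uW (subset_trans S'W (subD1set _ _)).
      by rewrite Nu subset0 => /eqP ->; rewrite cards0.
    have : nbrs_in e (u |: S') x \subset nbrs_in e S' x.
      apply/subsetP => z; rewrite !inE => /andP [/orP [/eqP zu|zS'] exz]; last by rewrite zS' exz.
      exfalso; have : x \in nbrs_in e W u.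
        by rewrite inE esym -zu exz (subsetP (subset_trans S'W (subD1set _ _)) _ xS').
      by rewrite Nu inE.
    move/subset_leq_card => h; apply: leq_trans h _.
    exact: (implyP (forallP spS' x) xS').
  - rewrite cardsU1 uS'; have := f_step1 (m := #|W|) ltac:(lia).
    have e1 : #|W| - 1 = #|W :\ u| by rewrite cW /= add1n subn1.
    rewrite e1 /= add1n => h; lia.
set X := (u |: nbrs_in e W u) :|: (w |: nbrs_in e W w).
have XW : X \subset W.
  have ns : forall x, nbrs_in e W x \subset W.
    by move=> x; apply/subsetP => z; rewrite inE => /andP [].
  by rewrite !subUset !sub1set uW wW !ns.
have uX : u \in X by rewrite !inE eqxx.
have wX : w \in X by rewrite !inE eqxx orbT.
have X2 : 2 <= #|X|.
  have : [set u; w] \subset X by rewrite subUset !sub1set uX wX.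
  by move/subset_leq_card; rewrite cards2 uw.
have cW : #|W :\: X| = #|W| - #|X| by rewrite cardsDS.
have XleW := subset_leq_card XW.
have [S' [S'W spS' fS']] := IH (W :\: X) ltac:(lia).
have S'W' : S' \subset W by apply: subset_trans S'W (subsetDl _ _).
have nX : forall z, z \in S' -> z \notin X.
  by move=> z /(subsetP S'W); rewrite inE => /andP [].
have uS' : u \notin S' by apply/negP => /nX; rewrite uX.
have wS' : w \notin S' by apply/negP => /nX; rewrite wX.
have NuX : forall z, z \in W -> e u z -> z \in X.
  by move=> z zW euz; rewrite !inE zW euz orbT.
have NwX : forall z, z \in W -> e w z -> z \in X.
  by move=> z zW ewz; rewrite !inE zW ewz !orbT.
exists (u |: (w |: S')); split.
- by rewrite !subUset !sub1set uW wW S'W'.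
- apply/forallP => x; apply/implyP; rewrite !in_setU1 => /orP [/eqP ->|/orP [/eqP ->|xS']].
  + have : nbrs_in e (u |: (w |: S')) u \subset [set w].
      apply/subsetP => z; rewrite !inE => /andP [/orP [/eqP ->|/orP [->//|zS']] euz].
        by rewrite eirr in euz.
      by move: (nX z zS'); rewrite (NuX z (subsetP S'W' _ zS') euz).
    by move/subset_leq_card; rewrite cards1.
  + have : nbrs_in e (u |: (w |: S')) w \subset [set u].
      apply/subsetP => z; rewrite !inE => /andP [/orP [->//|/orP [/eqP ->|zS']] ewz].
        by rewrite eirr in ewz.
      by move: (nX z zS'); rewrite (NwX z (subsetP S'W' _ zS') ewz).
    by move/subset_leq_card; rewrite cards1.
  + have : nbrs_in e (u |: (w |: S')) x \subset nbrs_in e S' x.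
      apply/subsetP => z; rewrite !inE => /andP [/orP [/eqP zu|/orP [/eqP zw|zS']] exz];
        last by rewrite zS' exz.
        by move: (nX x xS'); rewrite (NuX x (subsetP S'W' _ xS')) // esym -zu.
      by move: (nX x xS'); rewrite (NwX x (subsetP S'W' _ xS')) // esym -zw.
    move/subset_leq_card => h; apply: leq_trans h _.
    exact: (implyP (forallP spS' x) xS').
- rewrite cardsU1 in_setU1 negb_or uw uS' /= cardsU1 wS' /=.
  have X4 : #|X| <= 4 by [].
  have X14 : 1 <= #|X| <= 4 by rewrite X4 andbT; apply: leq_trans X2.
  move: (f_step XleW X14) => h; apply: leq_trans h _.
  rewrite cW in fS'; move: fS'; move: (fb (#|W| - #|X|)) => a; lia.
Qed.

End Proof.

Theorem lemma4p2 (T : finType) (e : rel T) :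
  symmetric e -> irreflexive e -> 0 < #|T| -> cactus e ->
  #|T|./2 + r4 #|T| <= alpha_k e 1.
Proof.
move=> esym eirr _ Hc.
have HC := C_prop eirr Hc.
have [S [_ spS fS]] := main_ind esym eirr HC (leqnn #|[set: T]|).
rewrite cardsT in fS; apply: leq_trans fS _.
rewrite /alpha_k; exact: (@leq_bigmax_cond _ (fun S : {set T} => k_sparse e 1 S) (fun S : {set T} => #|S|) S spS).
Qed.
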